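(* Let $\bm{\mu}\in X^{\mathcal{L}(\mathcal{T})}$. For every node $s\in S$: if $a_{s_0}(\bm{\mu})=$'win' then $d_s(\bm{\mu})>0\iff V_s(\bm{\mu})>\theta$; if $a_{s_0}(\bm{\mu})=$'lose' then $d_s(\bm{\mu})>0\iff V_s(\bm{\mu})<\theta$.
   Context: $\mathcal{T}$ is a finite rooted tree with node set $S$, root $s_0$, children $\mathcal{C}(s)$, leaves $\mathcal{L}(\mathcal{T})$; internal labels $L(s)\in\{\text{MAX},\text{MIN}\}$. $X\subseteq\mathbb{R}$ mean-parameter set of a one-parameter exponential family; $d(x,y)$ KL divergence between members with means $x,y$ (nonnegative, zero iff $x=y$); threshold $\theta\in X$. $V_s(\bm{\mu})=\mu_s$ at leaves, max/min of children's values at MAX/MIN nodes; $a_s(\bm{\mu})=$'win' iff $V_s(\bm{\mu})\ge\theta$. Define $d_s(\bm{\mu})$ bottom-up: let $a^*=a_{s_0}(\bm{\mu})$, $P=$MAX, $Q=$MIN if $a^*=$'win' and $P=$MIN, $Q=$MAX if 'lose'. Leaf $s$: $d_s=d(\mu_s,\theta)$ if ($a^*=$'win', $\mu_s\ge\theta$) or ($a^*=$'lose', $\mu_s<\theta$), else $0$. $L(s)=P$: $d_s=\max_{c\in\mathcal{C}(s)}d_c$. $L(s)=Q$: $d_s=(\sum_{c}1/d_c)^{-1}$ if $d_c>0$ for all $c\in\mathcal{C}(s)$, and $d_s=0$ otherwise. *)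

(* Defs.v *)
From Stdlib Require Import Reals List Bool.
Import ListNotations.
Open Scope R_scope.
Open Scope bool_scope.

Inductive label := MAX | MIN.

(* Finite rooted (ordered) trees: leaves carry an identifier of type Lf
   (the arm index), internal nodes carry a label and their list of children. *)
Inductive tree (Lf : Type) : Type :=
| Leaf : Lf -> tree Lf
| Node : label -> list (tree Lf) -> tree Lf.
Arguments Leaf {Lf} _.
Arguments Node {Lf} _ _.

(* [subtree s t] : s is a node of t (the subtree rooted at that node). *)
Inductive subtree {Lf : Type} : tree Lf -> tree Lf -> Prop :=
| sub_refl t : subtree t t
| sub_child s c k cs : In c cs -> subtree s c -> subtree s (Node k cs).

Definition well_formed {Lf : Type} (T : tree Lf) : Prop :=
  forall k cs, subtree (Node k cs) T -> cs <> [].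

Fixpoint value {Lf : Type} (mu : Lf -> R) (t : tree Lf) : R :=
  match t with
  | Leaf l => mu l
  | Node k cs =>
      let op := match k with MAX => Rmax | MIN => Rmin end in
      (fix go (cs : list (tree Lf)) : R :=
         match cs with
         | [] => 0
         | c :: cs' => match cs' with
                       | [] => value mu c
                       | _ => op (value mu c) (go cs')
                       end
         end) cs
  end.

Definition is_win {Lf : Type} (theta : R) (mu : Lf -> R) (T : tree Lf) : bool :=
  if Rle_dec theta (value mu T) then true else false.

(* d_s(mu), given the divergence d, threshold theta, and the root answer
   (win = true for 'win', false for 'lose').  P = MAX, Q = MIN if win;
   P = MIN, Q = MAX if lose. *)
Fixpoint dval {Lf : Type} (d : R -> R -> R) (theta : R) (mu : Lf -> R)
    (win : bool) (t : tree Lf) : R :=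
  match t with
  | Leaf l =>
      if win then (if Rle_dec theta (mu l) then d (mu l) theta else 0)
      else (if Rlt_dec (mu l) theta then d (mu l) theta else 0)
  | Node k cs =>
      let isP := match k, win with MAX, true | MIN, false => true | _, _ => false end in
      if isP then
        (fix go (cs : list (tree Lf)) : R :=
           match cs with
           | [] => 0
           | c :: cs' => match cs' with
                         | [] => dval d theta mu win c
                         | _ => Rmax (dval d theta mu win c) (go cs')
                         end
           end) cs
      else
        let allpos := (fix go (cs : list (tree Lf)) : bool :=
           match cs with
           | [] => true
           | c :: cs' => (if Rlt_dec 0 (dval d theta mu win c) then true else false)
                         && go cs'
           end) cs in
        let suminv := (fix go (cs : list (tree Lf)) : R :=
           match cs with
           | [] => 0
           | c :: cs' => / (dval d theta mu win c) + go cs'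
           end) cs in
        if allpos then / suminv else 0
  end.

(* Main.v *)
Require Import Defs.
From Stdlib Require Import Reals List.
From Stdlib Require Import Lra.
Import ListNotations.
Open Scope R_scope.

Section Folds.
Context {A : Type}.
Variable op : R -> R -> R.
Variable g : A -> R.
Fixpoint foldop (cs : list A) : R :=
  match cs with
  | [] => 0
  | c :: cs' => match cs' with [] => g c | _ => op (g c) (foldop cs') end
  end.
Fixpoint allposl (cs : list A) : bool :=
  match cs with
  | [] => true
  | c :: cs' => (if Rlt_dec 0 (g c) then true else false) && allposl cs'
  end.
Fixpoint suminvl (cs : list A) : R :=
  match cs with
  | [] => 0
  | c :: cs' => / (g c) + suminvl cs'
  end.
End Folds.

Lemma Rmax_gt a x y : a < Rmax x y <-> a < x \/ a < y.
Proof. unfold Rmax; destruct (Rle_dec x y); split; intros; try destruct H; lra. Qed.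
Lemma Rmax_lt a x y : Rmax x y < a <-> x < a /\ y < a.
Proof. unfold Rmax; destruct (Rle_dec x y); split; intros; try destruct H; lra. Qed.
Lemma Rmin_gt a x y : a < Rmin x y <-> a < x /\ a < y.
Proof. unfold Rmin; destruct (Rle_dec x y); split; intros; try destruct H; lra. Qed.
Lemma Rmin_lt a x y : Rmin x y < a <-> x < a \/ y < a.
Proof. unfold Rmin; destruct (Rle_dec x y); split; intros; try destruct H; lra. Qed.

Lemma fold_ex {A} (op : R -> R -> R) (Q : R -> Prop) (g : A -> R) :
  (forall x y, Q (op x y) <-> Q x \/ Q y) ->
  forall cs, cs <> [] -> (Q (foldop op g cs) <-> exists c, In c cs /\ Q (g c)).
Proof.
  intros Hop cs; induction cs as [|c cs IH]; intros Hne; [congruence|].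
  destruct cs as [|c' cs'].
  - simpl. split; [intros; exists c; auto|intros [x [[<-|[]] Hx]]; auto].
  - change (Q (op (g c) (foldop op g (c'::cs'))) <-> exists x, In x (c::c'::cs') /\ Q (g x)).
    rewrite Hop, IH by congruence. split.
    + intros [H|[x [Hi Hx]]]; [exists c; simpl; auto| exists x; simpl in *; auto].
    + intros [x [[<-|Hi] Hx]]; [left; auto|right; exists x; auto].
Qed.

Lemma fold_all {A} (op : R -> R -> R) (Q : R -> Prop) (g : A -> R) :
  (forall x y, Q (op x y) <-> Q x /\ Q y) ->
  forall cs, cs <> [] -> (Q (foldop op g cs) <-> forall c, In c cs -> Q (g c)).
Proof.
  intros Hop cs; induction cs as [|c cs IH]; intros Hne; [congruence|].
  destruct cs as [|c' cs'].
  - simpl. split; [intros H x [<-|[]]; auto|intros H; apply H; auto].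
  - change (Q (op (g c) (foldop op g (c'::cs'))) <-> forall x, In x (c::c'::cs') -> Q (g x)).
    rewrite Hop, IH by congruence. split.
    + intros [H1 H2] x [<-|Hi]; auto.
    + intros H; split; [apply H; simpl; auto| intros x Hi; apply H; simpl; auto].
Qed.

Lemma allpos_iff {A} (g : A -> R) cs :
  allposl g cs = true <-> forall c, In c cs -> 0 < g c.
Proof.
  induction cs as [|c cs IH]; simpl.
  - split; auto; intros _ _ [].
  - destruct (Rlt_dec 0 (g c)); simpl; try rewrite IH; split.
    + intros H x [<-|Hi]; auto.
    + intros H x Hi; auto.
    + discriminate.
    + intros H; exfalso; apply n; auto.
Qed.

Lemma suminv_nonneg {A} (g : A -> R) cs :
  (forall c, In c cs -> 0 < g c) -> 0 <= suminvl g cs.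
Proof.
  induction cs as [|c cs IH]; simpl; intros H; [lra|].
  assert (0 < / g c) by (apply Rinv_0_lt_compat; auto).
  assert (0 <= suminvl g cs) by (apply IH; auto). lra.
Qed.

Lemma suminv_pos {A} (g : A -> R) cs :
  cs <> [] -> (forall c, In c cs -> 0 < g c) -> 0 < suminvl g cs.
Proof.
  destruct cs as [|c cs]; [congruence|]; simpl; intros _ H.
  assert (0 < / g c) by (apply Rinv_0_lt_compat; auto).
  assert (0 <= suminvl g cs) by (apply suminv_nonneg; auto). lra.
Qed.

Lemma value_Node {Lf} (mu : Lf -> R) k cs :
  value mu (Node k cs) = foldop (match k with MAX => Rmax | MIN => Rmin end) (value mu) cs.
Proof. reflexivity. Qed.

Lemma dval_Node {Lf} d theta (mu : Lf -> R) w k cs :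
  dval d theta mu w (Node k cs) =
  if (match k, w with MAX, true | MIN, false => true | _, _ => false end)
  then foldop Rmax (dval d theta mu w) cs
  else if allposl (dval d theta mu w) cs then / suminvl (dval d theta mu w) cs else 0.
Proof. reflexivity. Qed.

Fixpoint tree_ind' {Lf} (P : tree Lf -> Prop) (HL : forall l, P (Leaf l))
  (HN : forall k cs, Forall P cs -> P (Node k cs)) (t : tree Lf) : P t :=
  match t with
  | Leaf l => HL l
  | Node k cs => HN k cs ((fix go (cs : list (tree Lf)) : Forall P cs :=
        match cs with
        | [] => Forall_nil _
        | c :: cs' => Forall_cons _ (tree_ind' P HL HN c) (go cs')
        end) cs)
  end.

Lemma subtree_trans {Lf} (a b c : tree Lf) : subtree a b -> subtree b c -> subtree a c.
Proof.
  intros H1 H2; induction H2; auto. econstructor; eauto.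
Qed.

Lemma key {Lf} (X : R -> Prop) d theta (mu : Lf -> R) :
  X theta ->
  (forall x y, X x -> X y -> 0 <= d x y) ->
  (forall x y, X x -> X y -> (d x y = 0 <-> x = y)) ->
  forall w t,
  (forall k cs, subtree (Node k cs) t -> cs <> []) ->
  (forall l, subtree (Leaf l) t -> X (mu l)) ->
  (0 < dval d theta mu w t <-> if w then theta < value mu t else value mu t < theta).
Proof.
  intros Xth Hd0 Hdeq w t. revert t.
  intros t; induction t using tree_ind'.
  - intros _ HX. rename l into l; specialize (HX l (sub_refl _)).
    specialize (Hd0 (mu l) theta HX Xth). specialize (Hdeq (mu l) theta HX Xth).
    simpl. destruct w.
    + destruct (Rle_dec theta (mu l)).
      * split; intros H.
        -- destruct (Req_dec (mu l) theta); [apply Hdeq in H0; lra | lra].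
        -- destruct (Req_dec (d (mu l) theta) 0); [apply Hdeq in H0; lra | lra].
      * split; lra.
    + destruct (Rlt_dec (mu l) theta).
      * split; intros H; [lra|].
        destruct (Req_dec (d (mu l) theta) 0); [apply Hdeq in H0; lra | lra].
      * split; lra.
  - rename H into IH; intros Hwf HX.
    assert (Hne : cs <> []) by (apply (Hwf k); constructor).
    assert (IHc : forall c, In c cs ->
      (0 < dval d theta mu w c <-> if w then theta < value mu c else value mu c < theta)).
    { intros c Hc. rewrite Forall_forall in IH. apply IH; auto.
      - intros k' cs' Hs. apply (Hwf k'). econstructor; eauto.
      - intros l Hs. apply HX. econstructor; eauto. }
    rewrite dval_Node, value_Node.
    assert (HQ : (if allposl (dval d theta mu w) cs then / suminvl (dval d theta mu w) cs else 0) > 0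
                 <-> forall c, In c cs -> 0 < dval d theta mu w c).
    { destruct (allposl (dval d theta mu w) cs) eqn:E.
      - rewrite allpos_iff in E. split; auto. intros _.
        apply Rinv_0_lt_compat, suminv_pos; auto.
      - split; [lra|]. intros H. rewrite <- allpos_iff in H. congruence. }
    assert (HP : 0 < foldop Rmax (dval d theta mu w) cs <-> exists c, In c cs /\ 0 < dval d theta mu w c)
      by (apply (fold_ex Rmax (fun x => 0 < x)); auto; intros; apply Rmax_gt).
    destruct k, w.
    + rewrite HP, (fold_ex Rmax (fun x => theta < x)); auto; [|intros; apply Rmax_gt].
      split; intros [c [Hc H]]; exists c; split; auto; apply IHc; auto.
    + unfold Rgt in HQ; rewrite HQ, (fold_all Rmax (fun x => x < theta)); auto; [|intros; apply Rmax_lt].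
      split; intros H c Hc; apply IHc; auto.
    + unfold Rgt in HQ; rewrite HQ, (fold_all Rmin (fun x => theta < x)); auto; [|intros; apply Rmin_gt].
      split; intros H c Hc; apply IHc; auto.
    + rewrite HP, (fold_ex Rmin (fun x => x < theta)); auto; [|intros; apply Rmin_lt].
      split; intros [c [Hc H]]; exists c; split; auto; apply IHc; auto.
Qed.

Theorem proposition8 (Lf : Type) (T : tree Lf) (X : R -> Prop)
  (d : R -> R -> R) (theta : R) (mu : Lf -> R) :
  well_formed T ->
  X theta ->
  (forall x y, X x -> X y -> 0 <= d x y) ->
  (forall x y, X x -> X y -> (d x y = 0 <-> x = y)) ->
  (forall l, subtree (Leaf l) T -> X (mu l)) ->
  forall s, subtree s T ->
    (is_win theta mu T = true ->
       (0 < dval d theta mu true s <-> theta < value mu s)) /\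
    (is_win theta mu T = false ->
       (0 < dval d theta mu false s <-> value mu s < theta)).
Proof.
  intros Hwf Xth Hd0 Hdeq HX s Hs.
  assert (H1 : forall k cs, subtree (Node k cs) s -> cs <> [])
    by (intros k cs H; apply (Hwf k); eapply subtree_trans; eauto).
  assert (H2 : forall l, subtree (Leaf l) s -> X (mu l))
    by (intros l H; apply HX; eapply subtree_trans; eauto).
  split; intros _.
  - exact (key X d theta mu Xth Hd0 Hdeq true s H1 H2).
  - exact (key X d theta mu Xth Hd0 Hdeq false s H1 H2).
Qed.
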